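(* Let $K$ and $K'$ be oriented virtual knot diagrams related by a finite sequence of classical Reidemeister II and III moves and virtual Reidemeister moves (including the mixed move), i.e. all classical and virtual Reidemeister moves except the classical Reidemeister I move. Then $\gamma(K)=\gamma(K')$ and $\bar\gamma(K)=\bar\gamma(K')$.
   Context: A virtual knot diagram is an immersion of one circle in the plane with classical crossings (over/under information) and virtual crossings; virtual knots are equivalence classes under classical and virtual Reidemeister moves. Fix an orientation. Each classical crossing $c$ has a sign $sgn(c)\in\{\pm1\}$ (the usual right-hand rule sign). For a classical crossing $c$ of $K$, let $K_c$ be the two-component oriented virtual link diagram obtained by smoothing $c$ in the orientation-respecting way (the ''vertical smoothing''), with inherited orientation. Let $L(K_c)$ be the sum of the signs of all classical crossings of $K_c$ at which the two strands belong to different components (no division by two), and $\bar L(K_c)=L(K_c) \bmod 2\in\{0,1\}$. Define $\gamma(K)=\sum_{c} t^{\bar L(K_c)}\,sgn(c)$, the sum over all classical crossings of $K$; this is an element $a+bt$ of the free $\mathbb{Z}$-module on $\{1,t\}$. Define $\bar\gamma(K)=\gamma(K) \bmod 2$, i.e. $\gamma(K)$ with coefficients reduced modulo $2$. *)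

(* Defs.v *)
(* Virtual knot diagrams are modelled by their Gauss diagrams
   (signed Gauss words read along the oriented circle), the standard
   combinatorial model of virtual knots (Goussarov-Polyak-Viro, Kauffman):
   virtual Reidemeister moves (incl. the mixed move) do not change the Gauss
   diagram, and classical R2/R3 moves become the Gauss-diagram moves below. *)
From Stdlib Require Import Relations.
From HB Require Import structures.
From mathcomp Require Import all_boot all_order all_algebra.
Set Implicit Arguments. Unset Strict Implicit. Unset Printing Implicit Defensive.
Import GRing.Theory Num.Theory.
Local Open Scope ring_scope.

(* A letter of a Gauss word: (crossing label, is over-passage, sign is +1). *)
Definition letter := (nat * bool * bool)%type.
Definition lab (l : letter) : nat := l.1.1.
Definition ovr (l : letter) : bool := l.1.2.
Definition pos (l : letter) : bool := l.2.

Definition gauss_wf (w : seq letter) : Prop :=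
  forall n, n \in map lab w ->
    count (fun l => (lab l == n) && ovr l) w = 1%N /\
    count (fun l => (lab l == n) && ~~ ovr l) w = 1%N /\
    {in w &, forall l1 l2, lab l1 = n -> lab l2 = n -> pos l1 = pos l2}.

Definition sgnz (l : letter) : int := if pos l then 1 else -1.

Definition io (w : seq letter) (n : nat) : nat := find (fun l => (lab l == n) && ovr l) w.
Definition iu (w : seq letter) (n : nat) : nat := find (fun l => (lab l == n) && ~~ ovr l) w.

Definition inside (i j k : nat) : bool := (minn i j < k)%N && (k < maxn i j)%N.

(* After smoothing crossing n, the two components are the two arcs of the
   circle between the passages of n; crossing m is an inter-component crossing
   of K_n iff exactly one of its passages lies on the arc strictly between. *)
Definition linked (w : seq letter) (n m : nat) : bool :=
  inside (io w n) (iu w n) (io w m) != inside (io w n) (iu w n) (iu w m).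

(* the crossings, each listed once (via its over-passage letter) *)
Definition overs (w : seq letter) : seq letter := [seq l <- w | ovr l].

Definition Lk (w : seq letter) (n : nat) : int :=
  \sum_(l <- overs w | (lab l != n) && linked w n (lab l)) sgnz l.

Definition Lbar (w : seq letter) (n : nat) : nat := (absz (Lk w n) %% 2)%N.

Definition gamma (w : seq letter) : {poly int} :=
  \sum_(l <- overs w) (sgnz l)%:P * 'X^(Lbar w (lab l)).

Definition gammabar (w : seq letter) : {poly 'Z_2} :=
  map_poly (fun z : int => z%:~R) (gamma w).

Definition seg (o : bool) (x y : letter) : letter * letter := if o then (x, y) else (y, x).

(* Three arcs T (top), M (middle), B (bottom) of an R3 triangle, each given by
   its two consecutive passages: crossing a = T over M, b = T over B,
   c = M over B.  The booleans oT, oM, oB record the order along each arc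
   (a before b on T, a before c on M, b before c on B); the last two
   conditions are exactly the realizability of the triangle by three
   oriented lines with the given crossing signs. *)
Definition r3_config (T M B : letter * letter) : Prop :=
  exists (a b c : nat) (sa sb sc oT oM oB : bool),
    uniq [:: a; b; c] /\
    T = seg oT (a, true, sa) (b, true, sb) /\
    M = seg oM (a, false, sa) (c, true, sc) /\
    B = seg oB (b, false, sb) (c, false, sc) /\
    (oT == sc) = (oM == sb) /\ (oM == sb) = (oB == sa).

Definition r3_triple (s1 s2 s3 : letter * letter) : Prop :=
  r3_config s1 s2 s3 \/ r3_config s1 s3 s2 \/ r3_config s2 s1 s3 \/
  r3_config s2 s3 s1 \/ r3_config s3 s1 s2 \/ r3_config s3 s2 s1.

Definition pair2 (p : letter * letter) : seq letter := [:: p.1; p.2].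
Definition swap2 (p : letter * letter) : seq letter := [:: p.2; p.1].

Definition relab (f : nat -> nat) (l : letter) : letter := (f (lab l), ovr l, pos l).

Inductive gstep : seq letter -> seq letter -> Prop :=
(* the word is cyclic: choice of base point *)
| gs_rot n w : gstep w (rot n w)
| gs_relab (f : nat -> nat) w : injective f -> gstep w (map (relab f) w)
(* classical Reidemeister II: two new crossings p, q of opposite signs, one
   arc passing over twice, another arc passing under twice (either order) *)
| gs_R2 u v x (p q : nat) (s o : bool) :
    p != q -> p \notin map lab (u ++ v ++ x) -> q \notin map lab (u ++ v ++ x) ->
    gstep (u ++ v ++ x)
      (u ++ [:: (p, true, s); (q, true, ~~ s)] ++ v ++
         (if o then [:: (p, false, s); (q, false, ~~ s)]
               else [:: (q, false, ~~ s); (p, false, s)]) ++ x)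
| gs_R3 u v y z s1 s2 s3 : r3_triple s1 s2 s3 ->
    gstep (u ++ pair2 s1 ++ v ++ pair2 s2 ++ y ++ pair2 s3 ++ z)
          (u ++ swap2 s1 ++ v ++ swap2 s2 ++ y ++ swap2 s3 ++ z).

Definition r23_equiv : seq letter -> seq letter -> Prop := clos_refl_sym_trans _ gstep.

(* Main.v *)
Require Import Defs.
From mathcomp Require Import all_boot all_order all_algebra.
From Stdlib Require Import Relations.
From mathcomp Require Import zify.
Set Implicit Arguments. Unset Strict Implicit. Unset Printing Implicit Defensive.
Import GRing.Theory Num.Theory.

Definition dual (l : letter) : letter := (lab l, ~~ ovr l, pos l).

Lemma dualK : involutive dual.
Proof. by case=> [[n o] s]; rewrite /dual /= negbK. Qed.

Lemma dual_inj : injective dual.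
Proof. exact: inv_inj dualK. Qed.

Lemma letter_eq (x y : letter) : lab x = lab y -> ovr x = ovr y -> pos x = pos y -> x = y.
Proof. by case: x => [[? ?] ?]; case: y => [[? ?] ?]; rewrite /lab /ovr /pos /= => -> -> ->. Qed.

Lemma wf_exists w l (b : bool) : gauss_wf w -> l \in w ->
  exists2 y, y \in w & (lab y = lab l) /\ (ovr y = b).
Proof.
move=> wf lw; have [|Ho [Hu _]] := wf (lab l); first by apply/mapP; exists l.
case: b.
  have : has (fun l0 => (lab l0 == lab l) && ovr l0) w by rewrite has_count Ho.
  by case/hasP=> y yw /andP[/eqP ? ?]; exists y.
have : has (fun l0 => (lab l0 == lab l) && ~~ ovr l0) w by rewrite has_count Hu.
by case/hasP=> y yw /andP[/eqP ? /negbTE ?]; exists y.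
Qed.

Lemma wf_dual w l : gauss_wf w -> l \in w -> dual l \in w.
Proof.
move=> wf lw; have [y yw [Hl Ho]] := wf_exists (~~ ovr l) wf lw.
have [|_ [_ Hs]] := wf (lab l); first by apply/mapP; exists l.
have -> : dual l = y; last by [].
by apply: letter_eq => //; rewrite /dual /= (Hs y l).
Qed.

Lemma wf_unique w x y : gauss_wf w -> x \in w -> y \in w ->
  lab x = lab y -> ovr x = ovr y -> x = y.
Proof.
move=> wf xw yw Hl Ho; have [|Hc1 [Hc2 Hs]] := wf (lab x); first by apply/mapP; exists x.
by apply: letter_eq => //; apply: Hs.
Qed.

Lemma wf_uniq w : gauss_wf w -> uniq w.
Proof.
move=> wf; apply: count_mem_uniq => x.
case xw: (x \in w); last by apply/count_memPn; rewrite xw.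
have [|Ho [Hu _]] := wf (lab x); first by apply/mapP; exists x.
apply/eqP; rewrite eqn_leq; apply/andP; split; last by rewrite -has_count; apply/hasP; exists x => /=.
change (count_mem x w <= 1); case ox: (ovr x).
- rewrite -Ho; apply: sub_count => y /= /eqP ->; by rewrite eqxx ox.
- rewrite -Hu; apply: sub_count => y /= /eqP ->; by rewrite eqxx ox.
Qed.

Lemma find_unique (w : seq letter) (P : pred letter) x : x \in w -> P x ->
  (forall y, y \in w -> P y -> y = x) -> find P w = index x w.
Proof.
move=> xw Px H; rewrite /index; apply: eq_in_find => y yw /=.
apply/idP/idP; first by move=> Py; rewrite (H y yw Py).
by move/eqP ->.
Qed.

Lemma io_index w l : gauss_wf w -> l \in w -> ovr l -> io w (lab l) = index l w.
Proof.
move=> wf lw ol; apply: find_unique => //; first by rewrite eqxx ol.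
move=> y yw /andP[/eqP Hl Ho]; apply: (wf_unique wf) => //; by rewrite Ho ol.
Qed.

Lemma iu_index w l : gauss_wf w -> l \in w -> ovr l -> iu w (lab l) = index (dual l) w.
Proof.
move=> wf lw ol; apply: find_unique; first exact: wf_dual.
  by rewrite /dual /= eqxx ol.
move=> y yw /andP[/eqP Hl Ho]; apply: (wf_unique wf) => //; first exact: wf_dual.
by rewrite /dual /= ol; apply/negbTE.
Qed.


Lemma absz_step (z e : int) : (e = 1 \/ e = -1)%R ->
  (absz (e + z)%R = (absz z).+1) \/ ((absz (e + z)%R).+1 = absz z).
Proof. case=> ->; lia. Qed.

Lemma odd_absz_step (z e : int) : (e = 1 \/ e = -1)%R ->
  odd (absz (e + z)%R) = ~~ odd (absz z).
Proof.
move=> He; case: (absz_step z He) => [->|<-] /=; first by [].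
by rewrite negbK.
Qed.

Lemma odd_absz_sum (s : seq letter) (P : pred letter) :
  odd (absz (\sum_(x <- s | P x) sgnz x)%R) = odd (count P s).
Proof.
elim: s => [|x s IH]; first by rewrite big_nil.
rewrite big_cons /=; case: (P x) => /=; last by rewrite add0n.
rewrite odd_absz_step ?IH //; rewrite /sgnz; case: (pos x); by [left|right].
Qed.

Lemma odd_count_xor (T : Type) (f g : pred T) s :
  odd (count (fun x => f x (+) g x) s) = odd (count f s) (+) odd (count g s).
Proof.
elim: s => [|x s IH] //=; rewrite !oddD IH.
by case: (f x); case: (g x); case: (odd (count f s)); case: (odd (count g s)).
Qed.

Lemma count_between a b N :
  count (fun k => (a < k) && (k < b)) (iota 0 N) = (minn N b - minn N a.+1)%N.
Proof.
elim: N => [|N IH]; first by rewrite !min0n.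
have -> : iota 0 N.+1 = iota 0 N ++ [:: N] by rewrite -addn1 iotaD.
rewrite count_cat IH /= ?add0n ?addn0.
case: (ltnP a N) => H1; case: (ltnP N b) => H2 /=; lia.
Qed.

Lemma map_index_uniq (T : eqType) (w : seq T) : uniq w ->
  map (index^~ w) w = iota 0 (size w).
Proof.
move=> uw; case: w uw => [|x0 w'] uw //.
apply: (@eq_from_nth _ 0%N); first by rewrite size_map size_iota.
move=> i; rewrite size_map => Hi.
by rewrite (nth_map x0) // nth_iota // add0n index_uniq.
Qed.

Lemma perm_count (T : eqType) (a : pred T) (s1 s2 : seq T) :
  perm_eq s1 s2 -> count a s1 = count a s2.
Proof. by move/permP. Qed.

Lemma dual_overs w : gauss_wf w ->
  perm_eq (map dual (overs w)) [seq l <- w | ~~ ovr l].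
Proof.
move=> wf; apply: uniq_perm.
- rewrite (map_inj_uniq dual_inj); apply: filter_uniq; exact: wf_uniq.
- apply: filter_uniq; exact: wf_uniq.
move=> y; rewrite mem_filter; apply/mapP/andP.
- case=> x; rewrite mem_filter => /andP[ox xw] ->; split; last exact: wf_dual.
  by rewrite /dual /= ox.
- case=> oy yw; exists (dual y); last by rewrite dualK.
  rewrite mem_filter; apply/andP; split; last exact: wf_dual.
  by rewrite /dual /=.
Qed.

Lemma size_even w : gauss_wf w -> ~~ odd (size w).
Proof.
move=> wf; rewrite -(count_predC ovr w) -!size_filter.
rewrite -(perm_size (dual_overs wf)) size_map.
by rewrite -/(overs w) addnn odd_double.
Qed.

Lemma Lbar_par w l : gauss_wf w -> l \in w -> ovr l ->
  Lbar w (lab l) = ~~ (odd (index l w) (+) odd (index (dual l) w)).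
Proof.
move=> wf lw ol.
set i := index l w; set j := index (dual l) w.
have dlw := wf_dual wf lw.
have ij : i != j.
  apply/eqP => E; have : nth l w i = nth l w j by rewrite E.
  rewrite !nth_index // => /(congr1 ovr); by rewrite /dual /= ol.
have iN : (i < size w)%N by rewrite index_mem.
have jN : (j < size w)%N by rewrite index_mem.
rewrite /Lbar /Lk modn2 odd_absz_sum; congr nat_of_bool.
set ins := fun k => inside i j k.
rewrite (@eq_in_count _ _ (fun x => ins (index x w) (+) ins (index (dual x) w))); last first.
  move=> x; rewrite mem_filter => /andP[ox xw] /=.
  rewrite /linked (io_index wf lw ol) (iu_index wf lw ol) -/i -/j.
  rewrite (io_index wf xw ox) (iu_index wf xw ox).
  case: (eqVneq (lab x) (lab l)) => E /=.
    have -> : x = l by apply: (wf_unique wf) => //; rewrite ox ol.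
    rewrite -/i -/j /ins /inside; symmetry; apply/negbTE; lia.
  by rewrite /ins; case: (inside i j (index x w)); case: (inside i j (index (dual x) w)).
rewrite odd_count_xor -(count_map dual (fun x => ins (index x w))).
rewrite (perm_count _ (dual_overs wf)) -oddD -count_cat.
rewrite (perm_count _ (permEl (perm_filterC ovr w))).
rewrite -(count_map (index^~ w) ins) (map_index_uniq (wf_uniq wf)).
rewrite /ins /inside count_between.
case: (ltngtP i j) ij => // H _.
- have -> : (minn (size w) j - minn (size w) i.+1 = j - i.+1)%N by lia.
  rewrite oddB // oddS; by case: (odd i); case: (odd j).
- have -> : (minn (size w) i - minn (size w) j.+1 = i - j.+1)%N by lia.
  rewrite oddB // oddS; by case: (odd i); case: (odd j).
Qed.

Definition par (w : seq letter) (l : letter) : bool := odd (index l w).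

Definition Fterm (f : letter -> bool) (l : letter) : {poly int} :=
  ((sgnz l)%:P * 'X^(nat_of_bool (~~ (f l (+) f (dual l)))))%R.

Definition G (w : seq letter) : {poly int} := (\sum_(l <- overs w) Fterm (par w) l)%R.

Lemma gamma_G w : gauss_wf w -> gamma w = G w.
Proof.
move=> wf; rewrite /gamma /G; apply: eq_big_seq => l; rewrite mem_filter => /andP[ol lw].
by rewrite /Fterm (Lbar_par wf lw ol).
Qed.


Lemma G_congr (s : seq letter) (f g : letter -> bool) :
  (forall l, l \in s -> f l (+) f (dual l) = g l (+) g (dual l)) ->
  (\sum_(l <- s) Fterm f l = \sum_(l <- s) Fterm g l)%R.
Proof. by move=> H; apply: eq_big_seq => l ls; rewrite /Fterm H. Qed.

Lemma par_rot_gen (t d : seq letter) y : uniq (t ++ d) -> ~~ odd (size (t ++ d)) -> y \in t ++ d ->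
  par (d ++ t) y = par (t ++ d) y (+) odd (size t).
Proof.
rewrite cat_uniq size_cat oddD mem_cat => /and3P[_ /hasPn hd _] ev ytd.
rewrite /par !index_cat; case yt: (y \in t).
- have yd : (y \in d) = false by apply/negbTE/negP => /hd; rewrite yt.
  rewrite yd; move: ev; rewrite !oddD.
  by case: (odd (size t)); case: (odd (size d)); case: (odd (index y t)).
- rewrite yt /= in ytd; move: ev; rewrite ytd !oddD.
  by case: (odd (size t)); case: (odd (size d)); case: (odd (index y d)).
Qed.

Lemma G_rot w k : gauss_wf w -> G (rot k w) = G w.
Proof.
move=> wf; case: (leqP (size w) k) => Hk; first by rewrite rot_oversize.
rewrite /G (perm_big _ (perm_filter ovr (permEl (perm_rot k w)))).
apply: G_congr => l; rewrite mem_filter => /andP[_ lw].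
have dlw := wf_dual wf lw.
have uw := wf_uniq wf; have ev := size_even wf.
rewrite -(cat_take_drop k w) in uw ev lw dlw.
rewrite /rot !(par_rot_gen uw ev) // cat_take_drop.
by case: (par w l); case: (par w (dual l)); case: (odd _).
Qed.

Lemma relab_inj f : injective f -> injective (relab f).
Proof.
move=> fi [[n o] s] [[n' o'] s']; rewrite /relab /lab /ovr /pos /=.
by case=> /fi -> -> ->.
Qed.

Lemma overs_relab f w : overs (map (relab f) w) = map (relab f) (overs w).
Proof. by rewrite /overs filter_map; congr map; apply: eq_filter => -[[n o] s]. Qed.

Lemma G_relab f w : injective f -> G (map (relab f) w) = G w.
Proof.
move=> fi; rewrite /G overs_relab big_map; apply: eq_bigr => l _.
rewrite /Fterm.
have -> : dual (relab f l) = relab f (dual l) by case: l => [[n o] s].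
rewrite /par !(index_map (relab_inj fi)).
by case: l => [[n o] s].
Qed.

Lemma par_ins (u P v Q x : seq letter) y : y \notin P -> y \notin Q ->
  ~~ odd (size P) -> ~~ odd (size Q) ->
  par (u ++ P ++ v ++ Q ++ x) y = par (u ++ v ++ x) y.
Proof.
move=> /negbTE yP /negbTE yQ eP eQ; rewrite /par !index_cat yP yQ.
case: (y \in u) => //; case: (y \in v); rewrite !oddD.
- by move: eP; case: (odd (size P)).
- by move: eP eQ; case: (odd (size P)); case: (odd (size Q)).
Qed.

Lemma notin_lab (s : seq letter) y : lab y \notin map lab s -> y \notin s.
Proof. by apply: contra => ys; apply: map_f. Qed.

Lemma pair_cancel (s a b : bool) : a = b ->
  ((if s then 1 else -1)%:P * 'X^a + (if ~~ s then 1 else -1)%:P * 'X^b = 0 :> {poly int})%R.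
Proof. by move=> ->; case: s; rewrite /= ?polyCN ?mulNr ?GRing.addrN ?GRing.addNr. Qed.

Lemma G_R2 u v x (p q : nat) (s o : bool) :
    p != q -> p \notin map lab (u ++ v ++ x) -> q \notin map lab (u ++ v ++ x) ->
    G (u ++ [:: (p, true, s); (q, true, ~~ s)] ++ v ++
         (if o then [:: (p, false, s); (q, false, ~~ s)]
               else [:: (q, false, ~~ s); (p, false, s)]) ++ x) = G (u ++ v ++ x).
Proof.
move=> pq pn qn; rewrite /G.
set w' := (u ++ _ ++ _ ++ _ ++ x).
have P1 : perm_eq (overs w') ([:: (p, true, s); (q, true, ~~ s)] ++ overs (u ++ v ++ x)).
  rewrite /w' /overs !filter_cat; clear w'; case: o => /=; rewrite ?cats0;
  exact: (permEl (perm_catCA _ [:: _; _] _)).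
rewrite (perm_big _ P1) big_cat /= !big_cons big_nil GRing.addr0.
have lnp : forall l, l \in u ++ v ++ x -> (lab l != p) && (lab l != q).
  move=> l lw; apply/andP; split; apply/negP => /eqP E.
  - by move: pn; rewrite -E map_f.
  - by move: qn; rewrite -E map_f.
have Hrest : (\sum_(i <- overs (u ++ v ++ x)) Fterm (par w') i =
              \sum_(i <- overs (u ++ v ++ x)) Fterm (par (u ++ v ++ x)) i)%R.
  apply: G_congr => l; rewrite mem_filter => /andP[_ /lnp /andP[lp lq]].
  have nP : forall y, lab y != p -> lab y != q ->
      (y \notin [:: (p, true, s); (q, true, ~~ s)]) &&
      (y \notin (if o then [:: (p, false, s); (q, false, ~~ s)]
                else [:: (q, false, ~~ s); (p, false, s)])).
    move=> y yp yq; apply/andP; split; last case: (o); rewrite !inE;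
    apply/negP; case/orP => /eqP E; by rewrite E ?eqxx in yp yq.
  have /andP[l1 l2] := nP l lp lq.
  have /andP[l3 l4] := nP (dual l) lp lq.
  rewrite /w' !par_ins //; by case: (o).
rewrite Hrest; apply/eqP; rewrite -subr_eq0 GRing.addrK; apply/eqP.
have nin : forall (t : seq letter) y, {subset t <= u ++ v ++ x} ->
    (lab y == p) || (lab y == q) -> (y \in t) = false.
  move=> t y sub /orP H; apply/negbTE/negP => /sub /lnp /andP[H1 H2].
  by case: H => /eqP E; rewrite E eqxx in H1 H2.
have su : {subset u <= u ++ v ++ x} by move=> y yu; rewrite mem_cat yu.
have sv : {subset v <= u ++ v ++ x} by move=> y yv; rewrite !mem_cat yv orbT.
have qp : q != p by rewrite eq_sym.
rewrite /Fterm /par /w' /dual /sgnz /lab /ovr /pos /=; case: (o);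
  rewrite !index_cat !(nin u) ?(nin v) //= ?xpair_eqE ?eqxx ?(negbTE pq) ?(negbTE qp) /=;
  rewrite ?index_cat ?(nin v) //= ?inE ?xpair_eqE ?eqxx ?(negbTE pq) ?(negbTE qp) /=;
  try by []; apply: pair_cancel; rewrite !oddD /= ?addn0 ?addn1 /=; by case: (odd (size u)); case: (odd (size v)).
Qed.

Lemma par_swap (u r : seq letter) x1 x2 y : uniq (u ++ [:: x1; x2]) ->
  par (u ++ [:: x2; x1] ++ r) y = par (u ++ [:: x1; x2] ++ r) y (+) (y \in [:: x1; x2]).
Proof.
rewrite cat_uniq /= => /and3P[_ hu /andP[]]; rewrite inE => n12 _.
rewrite /par !index_cat; case yu: (y \in u).
  have : y \notin [:: x1; x2].
    apply/negP; rewrite !inE => /orP[] /eqP E; by move: hu; rewrite -E yu /= ?orbT.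
  by case: (y \in [:: x1; x2]) => //= _; rewrite addbF.
rewrite /= !inE !(eq_sym y).
case e1: (x1 == y); case e2: (x2 == y) => /=.
- by move/eqP: e1 => E; move/eqP: e2; rewrite -E => E2; rewrite E2 eqxx in n12.
- by rewrite ?addn1 ?addn0 /= ?addbT.
- by rewrite ?addn1 ?addn0 /= addbT negbK.
- by rewrite addbF.
Qed.

Definition chi3 (s1 s2 s3 : letter * letter) (t : letter) : bool :=
  (t \in pair2 s1) (+) (t \in pair2 s2) (+) (t \in pair2 s3).

Lemma mem_seg o x y (t : letter) : (t \in pair2 (seg o x y)) = (t == x) || (t == y).
Proof. by case: o; rewrite /pair2 /seg /= !inE // orbC. Qed.

Lemma dual_eq (t x : letter) : (dual t == x) = (t == dual x).
Proof. by rewrite -{1}(dualK x) (inj_eq dual_inj). Qed.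

Lemma chi_config T M B : r3_config T M B -> forall t, chi3 T M B t = chi3 T M B (dual t).
Proof.
case=> a [b [c [sa [sb [sc [oT [oM [oB [U [ET [EM [EB _]]]]]]]]]]]] t; subst T M B.
rewrite /chi3 !mem_seg !dual_eq /dual /lab /ovr /pos /=.
move: U; rewrite /= !inE negb_or => /andP[/andP[ab ac] /andP[bc _]].
case: t => [[n o] s']; rewrite !xpair_eqE.
have simp := (eq_sym b a, eq_sym c a, eq_sym c b, negbTE ab, negbTE ac, negbTE bc).
case: (eqVneq n a) => [->|na].
  by rewrite !simp /=; case: o; case: (s' == sa).
case: (eqVneq n b) => [->|nb].
  by rewrite !simp /=; case: o; case: (s' == sb).
by case: (n == c); case: o; case: (s' == sc).
Qed.

Lemma chi_triple s1 s2 s3 : r3_triple s1 s2 s3 ->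
  forall t, chi3 s1 s2 s3 t = chi3 s1 s2 s3 (dual t).
Proof.
move=> H t; rewrite /chi3.
case: H => [H|[H|[H|[H|[H|H]]]]]; move: (chi_config H t); rewrite /chi3;
by case: (t \in pair2 s1); case: (t \in pair2 s2); case: (t \in pair2 s3);
   case: (dual t \in pair2 s1); case: (dual t \in pair2 s2); case: (dual t \in pair2 s3).
Qed.

Lemma swap_perm (s : letter * letter) : perm_eq (swap2 s) (pair2 s).
Proof. by rewrite /swap2 /pair2 (permEl (perm_catC [:: s.2] [:: s.1])). Qed.

Lemma G_R3 u v y z s1 s2 s3 : r3_triple s1 s2 s3 ->
  gauss_wf (u ++ pair2 s1 ++ v ++ pair2 s2 ++ y ++ pair2 s3 ++ z) ->
  G (u ++ swap2 s1 ++ v ++ swap2 s2 ++ y ++ swap2 s3 ++ z) =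
  G (u ++ pair2 s1 ++ v ++ pair2 s2 ++ y ++ pair2 s3 ++ z).
Proof.
move=> tr wf.
set w0 := (u ++ pair2 s1 ++ _).
set w3 := (u ++ swap2 s1 ++ _).
set w1 := u ++ swap2 s1 ++ v ++ pair2 s2 ++ y ++ pair2 s3 ++ z.
set w2 := u ++ swap2 s1 ++ v ++ swap2 s2 ++ y ++ pair2 s3 ++ z.
have p01 : perm_eq w1 w0 by rewrite /w1 /w0 perm_cat2l perm_cat2r swap_perm.
have p12 : perm_eq w2 w1.
  by rewrite /w1 /w2 perm_cat2l perm_cat2l perm_cat2l perm_cat2r swap_perm.
have p23 : perm_eq w3 w2.
  by rewrite /w3 /w2 !perm_cat2l perm_cat2r swap_perm.
have u0 := wf_uniq wf.
have u1 : uniq w1 by rewrite (perm_uniq p01).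
have u2 : uniq w2 by rewrite (perm_uniq p12).
have p30 : perm_eq w3 w0 by rewrite (perm_trans p23) // (perm_trans p12).
rewrite /G (perm_big _ (perm_filter ovr p30)).
have e1 : forall t, par w1 t = par w0 t (+) (t \in pair2 s1).
  move=> t; rewrite /w1 /w0 /swap2 /pair2; apply: par_swap.
  by move: u0; rewrite /w0 /pair2 catA cat_uniq => /andP[].
have e2 : forall t, par w2 t = par w1 t (+) (t \in pair2 s2).
  move=> t; have := @par_swap (u ++ swap2 s1 ++ v) (y ++ pair2 s3 ++ z) s2.1 s2.2 t.
  rewrite -!catA => -> //.
  have : uniq (((u ++ swap2 s1 ++ v) ++ [:: s2.1; s2.2]) ++ (y ++ pair2 s3 ++ z)).
    by rewrite -!catA.
  by rewrite cat_uniq -!catA => /andP[].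
have e3 : forall t, par w3 t = par w2 t (+) (t \in pair2 s3).
  move=> t; have := @par_swap (u ++ swap2 s1 ++ v ++ swap2 s2 ++ y) z s3.1 s3.2 t.
  rewrite -!catA => -> //.
  have : uniq (((u ++ swap2 s1 ++ v ++ swap2 s2 ++ y) ++ [:: s3.1; s3.2]) ++ z).
    by rewrite -!catA.
  by rewrite cat_uniq -!catA => /andP[].
apply: G_congr => l _.
rewrite !e3 !e2 !e1.
move: (chi_triple tr l); rewrite /chi3.
by case: (par w0 l); case: (par w0 (dual l)); case: (dual l \in pair2 s1);
   case: (l \in pair2 s1); case: (l \in pair2 s2); case: (l \in pair2 s3);
   case: (dual l \in pair2 s2); case: (dual l \in pair2 s3).
Qed.



Lemma wf_perm w w' : perm_eq w w' -> gauss_wf w -> gauss_wf w'.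
Proof.
move=> pw wf n; rewrite -(perm_mem (perm_map lab pw)) => /wf [H1 [H2 H3]].
rewrite -!(perm_count _ pw); split => //; split => //.
move=> l1 l2 h1 h2; apply: H3; by rewrite (perm_mem pw).
Qed.

Lemma lab_relab f x : lab (relab f x) = f (lab x). Proof. by []. Qed.
Lemma ovr_relab f x : ovr (relab f x) = ovr x. Proof. by []. Qed.
Lemma pos_relab f x : pos (relab f x) = pos x. Proof. by []. Qed.

Lemma count_relab f w (m : nat) (B : bool -> bool) : injective f ->
  count (fun l => (lab l == f m) && B (ovr l)) (map (relab f) w) =
  count (fun l => (lab l == m) && B (ovr l)) w.
Proof.
move=> fi; rewrite count_map; apply: eq_count => x /=.
by rewrite lab_relab ovr_relab (inj_eq fi).
Qed.

Lemma wf_relab f w : injective f -> (gauss_wf (map (relab f) w) <-> gauss_wf w).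
Proof.
move=> fi; split.
- move=> wf n /mapP [l lw ->].
  have [|H1 [H2 H3]] := wf (f (lab l)).
    by apply/mapP; exists (relab f l); [apply: map_f|].
  rewrite (count_relab w (lab l) id fi) in H1.
  rewrite (count_relab w (lab l) negb fi) in H2.
  split => //; split => //.
  move=> l1 l2 h1 h2 e1 e2; rewrite -(pos_relab f l1) -(pos_relab f l2).
  by apply: H3; rewrite ?lab_relab ?e1 ?e2 //; apply: map_f.
- move=> wf n /mapP [l' /mapP [l lw ->] ->]; rewrite lab_relab.
  have [|H1 [H2 H3]] := wf (lab l); first by apply: map_f.
  rewrite (count_relab w (lab l) id fi) (count_relab w (lab l) negb fi).
  split => //; split => //.
  move=> x1 x2 /mapP[y1 y1w ->] /mapP[y2 y2w ->]; rewrite !lab_relab !pos_relab.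
  by move=> /fi e1 /fi e2; apply: H3.
Qed.

Lemma count_fresh (w : seq letter) n (B : bool -> bool) : n \notin map lab w ->
  count (fun l => (lab l == n) && B (ovr l)) w = 0%N.
Proof.
move=> nw; apply/eqP; rewrite -leqn0 leqNgt -has_count; apply/hasPn => l lw.
apply/negP => /andP[/eqP E _]; by move: nw; rewrite -E map_f.
Qed.

Definition S4 (p q : nat) (s : bool) : seq letter := [:: (p, true, s); (q, true, ~~ s); (p, false, s); (q, false, ~~ s)].

Lemma memS (p q : nat) (s : bool) l : l \in S4 p q s -> (lab l = p /\ pos l = s) \/ (lab l = q /\ pos l = ~~ s).
Proof. by rewrite !inE => /or4P [] /eqP ->; [left|right|left|right]. Qed.

Lemma countS (p q : nat) (s : bool) n (B : bool -> bool) :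
  count (fun l => (lab l == n) && B (ovr l)) (S4 p q s) =
  ((p == n) && B true + (q == n) && B true + (p == n) && B false + (q == n) && B false)%N.
Proof. rewrite /= /lab /ovr /=; lia. Qed.

Lemma wf_S (p q : nat) (s : bool) (pq : p != q) w : p \notin map lab w -> q \notin map lab w ->
  (gauss_wf (S4 p q s ++ w) <-> gauss_wf w).
Proof.
move=> pw qw; have qp : q != p by rewrite eq_sym.
split.
- move=> wf n nw.
  have [|H1 [H2 H3]] := wf n; first by rewrite map_cat mem_cat nw orbT.
  have np : p != n by apply: contraNneq pw => ->.
  have nq : q != n by apply: contraNneq qw => ->.
  rewrite count_cat (countS p q s n id) (negbTE np) (negbTE nq) /= in H1.
  rewrite count_cat (countS p q s n negb) (negbTE np) (negbTE nq) /= in H2.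
  split => //; split => //.
  move=> l1 l2 h1 h2; apply: H3; by rewrite mem_cat ?h1 ?h2 orbT.
- move=> wf n; rewrite map_cat mem_cat => /orP[nS|nw]; last first.
    have [H1 [H2 H3]] := wf n nw.
    have np : p != n by apply: contraNneq pw => ->.
    have nq : q != n by apply: contraNneq qw => ->.
    rewrite !count_cat (countS p q s n id) (countS p q s n negb) (negbTE np) (negbTE nq) /=.
    split => //; split => //.
    move=> l1 l2 h1 h2; move: (h1 : l1 \in S4 p q s ++ w) (h2 : l2 \in S4 p q s ++ w).
    rewrite !mem_cat => /orP[/memS m1|k1].
      by case: m1 => -[E _] _ E' _; rewrite -E' E eqxx in np nq.
    move=> /orP[/memS m2|k2].
      by case: m2 => -[E _] _ E'; rewrite -E' E eqxx in np nq.
    by move=> e1 e2; apply: H3.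
  have Hn : (n == p) || (n == q) by move: nS => /=; rewrite !inE; case: (n == p); case: (n == q).
  have nfresh : n \notin map lab w by case/orP: Hn => /eqP ->.
  rewrite !count_cat (countS p q s n id) (countS p q s n negb) (count_fresh id nfresh) (count_fresh negb nfresh) /=.
  have [nsg Hsg] : exists sg : bool, forall l, l \in S4 p q s ++ w -> lab l = n -> pos l = sg.
    case/orP: Hn => /eqP En; [exists s|exists (~~ s)] => l; rewrite mem_cat => /orP[/memS|lw].
    + by case=> -[E1 E2] // E3; move: pq; rewrite -E1 E3 En eqxx.
    + by move=> E; move: nfresh; rewrite -E map_f.
    + by case=> -[E1 E2] // E3; move: pq; rewrite -E1 E3 En eqxx.
    + by move=> E; move: nfresh; rewrite -E map_f.
  split; last split; last by move=> l1 l2 h1 h2 e1 e2; rewrite !Hsg.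
  + case/orP: Hn => /eqP ->; rewrite eqxx ?(negbTE pq) ?(negbTE qp) /=; lia.
  + case/orP: Hn => /eqP ->; rewrite eqxx ?(negbTE pq) ?(negbTE qp) /=; lia.
Qed.

Lemma perm_R2 u v x (p q : nat) (s o : bool) :
  perm_eq (u ++ [:: (p, true, s); (q, true, ~~ s)] ++ v ++
         (if o then [:: (p, false, s); (q, false, ~~ s)]
               else [:: (q, false, ~~ s); (p, false, s)]) ++ x)
          (S4 p q s ++ (u ++ v ++ x)).
Proof.
apply/permP => a; rewrite !count_cat /S4; case: o => /=; lia.
Qed.

Lemma wf_R2 u v x (p q : nat) (s o : bool) :
    p != q -> p \notin map lab (u ++ v ++ x) -> q \notin map lab (u ++ v ++ x) ->
    (gauss_wf (u ++ v ++ x) <->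
     gauss_wf (u ++ [:: (p, true, s); (q, true, ~~ s)] ++ v ++
         (if o then [:: (p, false, s); (q, false, ~~ s)]
               else [:: (q, false, ~~ s); (p, false, s)]) ++ x)).
Proof.
move=> pq pn qn; have P := perm_R2 u v x p q s o.
rewrite -(wf_S s pq pn qn); split; apply: wf_perm => //; by rewrite perm_sym.
Qed.

Lemma step_inv w w' : gstep w w' ->
  (gauss_wf w <-> gauss_wf w') /\ (gauss_wf w -> G w = G w').
Proof.
case.
- move=> n w0; split; last by move=> wf; rewrite G_rot.
  split; apply: wf_perm; [rewrite perm_sym|]; exact: (permEl (perm_rot n w0)).
- move=> f w0 fi; split; first by split; move/(wf_relab w0 fi).
  by move=> _; rewrite G_relab.
- move=> u v x p q s o pq pn qn; split; first exact: wf_R2.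
  by move=> _; rewrite G_R2.
- move=> u v y z s1 s2 s3 tr.
  have P : perm_eq (u ++ swap2 s1 ++ v ++ swap2 s2 ++ y ++ swap2 s3 ++ z)
                   (u ++ pair2 s1 ++ v ++ pair2 s2 ++ y ++ pair2 s3 ++ z).
    rewrite perm_cat2l; apply: perm_cat; first exact: swap_perm.
    rewrite perm_cat2l; apply: perm_cat; first exact: swap_perm.
    rewrite perm_cat2l; apply: perm_cat; [exact: swap_perm | exact: perm_refl].
  split; last by move=> wf; rewrite G_R3.
  split; apply: wf_perm => //; by rewrite perm_sym.
Qed.


Lemma equiv_inv K K' : r23_equiv K K' ->
  (gauss_wf K <-> gauss_wf K') /\ (gauss_wf K -> gamma K = gamma K').
Proof.
elim=> {K K'}.
- move=> x y st; have [E H] := step_inv st; split => // wf.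
  by rewrite !gamma_G ?H //; exact: (proj1 E wf).
- by move=> x; split => //; split.
- move=> x y _ [E H]; split; first by split; [exact: (proj2 E) | exact: (proj1 E)].
  move=> wy; have wx : gauss_wf x := proj2 E wy.
  by rewrite H.
- move=> x y z _ [E1 H1] _ [E2 H2]; split; first by rewrite E1.
  by move=> wx; rewrite H1 // H2 //; exact: (proj1 E1 wx).
Qed.

Theorem mainTheorem1 (K K' : seq letter) :
  gauss_wf K -> r23_equiv K K' ->
  gamma K = gamma K' /\ gammabar K = gammabar K'.
Proof.
move=> wf /equiv_inv [_ H]; have E := H wf.
by split; last rewrite /gammabar E.
Qed.
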